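(* The greedy algorithm, applied to the declared types, is a truthful mechanism without money and with verification for CAs with unknown $k$-minded bidders (single supply).
   Context: Combinatorial auction with a set $\mathsf U$ of $m$ goods, each in a single copy, and $n$ bidders. True type of bidder $i$: $t_i=(v_i,\mathcal S_i)$ with $\mathcal S_i$ a private collection of $k$ nonempty subsets of $\mathsf U$ and $v_i:\mathcal S_i\to\mathbb R_{\ge0}$ private, extended by $v_i(T)=\max\{v_i(S'):S'\in\mathcal S_i,S'\subseteq T\}$ ($0$ if none). Declarations $(w,\mathcal W)$ have the same form. Greedy algorithm on declarations $(w_i,\mathcal W_i)$: list all elementary bids $(i,S,w_i(S))$ with $S\in\mathcal W_i$, $w_i(S)>0$ in non-increasing order of value, ties broken in favour of smaller bidder index; scan the list and accept $(i,S,w_i(S))$ (allocate $S$ to $i$) iff $i$ has not yet been allocated a set and $S$ is disjoint from all previously accepted sets. Verification: bidder $i$ with true type $t_i$ facing $\mathbf b_{-i}$ may declare $b_i=(z,\mathcal T)$ only if $z(A_i(b_i,\mathbf b_{-i}))\le v_i(A_i(b_i,\mathbf b_{-i}))$. Truthful without money and with verification: for all $i$, $\mathbf b_{-i}$, true types $t_i$ and declarations $b_i$ permitted by verification, $v_i(A_i(t_i,\mathbf b_{-i}))\ge v_i(A_i(b_i,\mathbf b_{-i}))$. *)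

(* Defs.v *)
From HB Require Import structures.
From mathcomp Require Import all_boot all_order all_algebra.
Set Implicit Arguments. Unset Strict Implicit. Unset Printing Implicit Defensive.
Import Order.TTheory GRing.Theory Num.Theory.
Local Open Scope ring_scope.

Section Auction.
Variables (R : realFieldType) (m n : nat).

(* Goods are 'I_m, bidders are 'I_n. A type (or declaration) is a pair
   (v, S): S a collection of subsets of goods, v a valuation whose values
   matter only on S. *)
Definition bidtype := (({set 'I_m} -> R) * {set {set 'I_m}})%type.

Definition kminded (k : nat) (t : bidtype) : Prop :=
  [/\ #|t.2| = k, set0 \notin t.2 & forall S, S \in t.2 -> 0 <= t.1 S].

Definition ext_val (t : bidtype) (T : {set 'I_m}) : R :=
  \big[Num.max/0]_(S' in t.2 | S' \subset T) t.1 S'.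

Definition profile := 'I_n -> bidtype.

Definition bid := ('I_n * {set 'I_m})%type.

Definition elem_bids (b : profile) : seq bid :=
  [seq p <- [seq (i, X) | i <- enum 'I_n, X <- enum (b i).2] | 0 < (b p.1).1 p.2].

Definition bid_before (b : profile) (x y : bid) : bool :=
  let vx := (b x.1).1 x.2 in let vy := (b y.1).1 y.2 in
  (vy < vx) || ((vx == vy) &&
    ((x.1 < y.1)%N || ((x.1 == y.1) && (enum_rank x.2 <= enum_rank y.2)%N))).

Definition sorted_bids (b : profile) : seq bid := sort (bid_before b) (elem_bids b).

Definition greedy_step (acc : seq bid) (x : bid) : seq bid :=
  if (x.1 \notin [seq p.1 | p <- acc]) &&
     [disjoint x.2 & \bigcup_(p <- acc) p.2]
  then rcons acc x else acc.

Definition greedy_accepted (b : profile) : seq bid :=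
  foldl greedy_step [::] (sorted_bids b).

Definition alloc (b : profile) (i : 'I_n) : {set 'I_m} :=
  if [seq p.2 | p <- greedy_accepted b & p.1 == i] is X :: _ then X else set0.

Definition upd (b : profile) (i : 'I_n) (t : bidtype) : profile :=
  fun j => if j == i then t else b j.

End Auction.

(* Main.v *)
Require Import Defs.
From HB Require Import structures.
From mathcomp Require Import all_boot all_order all_algebra.
From mathcomp Require Import lra.
Import Order.TTheory GRing.Theory Num.Theory.
Local Open Scope ring_scope.

Section Proofs.
Variables (R : realFieldType) (m n : nat).

Lemma bb_trans (b : profile R m n) : transitive (bid_before b).
Proof.
move=> [yi yS] [xi xS] [zi zS]; rewrite /bid_before /=.
move: ((b xi).1 xS) ((b yi).1 yS) ((b zi).1 zS) => vx vy vz.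
case/orP => [h1|/andP[/eqP e1 h1]]; case/orP => [h2|/andP[/eqP e2 h2]].
- by rewrite (lt_trans h2 h1).
- by rewrite -e2 h1.
- by rewrite e1 h2.
- rewrite e1 e2 eqxx ltxx /=.
  case/orP: h1 => [h1|/andP[/eqP e3 h3]]; case/orP: h2 => [h2|/andP[/eqP e4 h4]].
  + by rewrite (ltn_trans h1 h2).
  + by rewrite -e4 h1.
  + by rewrite e3 h2.
  + by rewrite e3 e4 eqxx (leq_trans h3 h4) orbT.
Qed.

Lemma bb_anti (b : profile R m n) : antisymmetric (bid_before b).
Proof.
move=> [xi xS] [yi yS]; rewrite /bid_before /=.
move: ((b xi).1 xS) ((b yi).1 yS) => vx vy.
case/andP => /orP[h1|/andP[/eqP e1 h1]] /orP[h2|/andP[/eqP e2 h2]].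
- by move: (lt_trans h1 h2); rewrite ltxx.
- by move: h1; rewrite e2 ltxx.
- by move: h2; rewrite e1 ltxx.
- case/orP: h1 => [h1|/andP[/eqP e3 h3]]; case/orP: h2 => [h2|/andP[/eqP e4 h4]].
  + by move: (ltn_trans h1 h2); rewrite ltnn.
  + by move: h1; rewrite e4 ltnn.
  + by move: h2; rewrite e3 ltnn.
  + subst; congr pair; apply: enum_rank_inj; apply/val_inj/eqP; by rewrite eqn_leq h3 h4.
Qed.

Lemma bb_total (b : profile R m n) : total (bid_before b).
Proof.
move=> [xi xS] [yi yS]; rewrite /bid_before /=.
move: ((b xi).1 xS) ((b yi).1 yS) => vx vy.
case: (ltgtP vx vy) => [h|h|e]; rewrite ?h /= ?orbT //.
case: (ltngtP xi yi) => [h|h|/val_inj ->]; rewrite ?h /= ?orbT //.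
rewrite ?eqxx ?ltnn /=; exact: leq_total.
Qed.


Implicit Types (acc s : seq (bid m n)).
Local Notation gs := (@greedy_step m n).

Lemma in_ids (i : 'I_n) s : (i \in [seq p.1 | p <- s]) = has (fun p => p.1 == i) s.
Proof. by elim: s => //= x s IH; rewrite in_cons IH eq_sym. Qed.

Lemma foldl_ext acc s : exists r, foldl gs acc s = acc ++ r.
Proof.
elim: s acc => [|x s IH] acc /=; first by exists [::]; rewrite cats0.
have [r ->] := IH (greedy_step acc x).
rewrite /greedy_step; case: ifP => _; last by exists r.
by exists (x :: r); rewrite -cats1 -catA.
Qed.

Lemma foldl_sub acc s y : y \in foldl gs acc s -> (y \in acc) || (y \in s).
Proof.
elim: s acc => [|x s IH] acc /=; first by move->.
move/IH; rewrite /greedy_step in_cons; case: ifP => _; last first.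
  by case/orP=> ->; rewrite ?orbT.
rewrite mem_rcons in_cons; case/orP; [case/orP|] => ->; by rewrite ?orbT.
Qed.

Lemma ids_uniq acc s : uniq [seq p.1 | p <- acc] ->
  uniq [seq p.1 | p <- foldl gs acc s].
Proof.
elim: s acc => [|x s IH] acc //= u; apply: IH.
rewrite /greedy_step; case: ifP => // /andP[h _].
by rewrite map_rcons rcons_uniq h u.
Qed.

Lemma step_cases acc x : gs acc x = rcons acc x \/ gs acc x = acc.
Proof. by rewrite /greedy_step; case: ifP; [left|right]. Qed.

Lemma drop_i (i : 'I_n) acc s :
  ~~ has (fun p => p.1 == i) (foldl gs acc s) ->
  foldl gs acc s = foldl gs acc [seq y <- s | y.1 != i].
Proof.
elim: s acc => [|x s IH] acc //=.
case: eqP => [ex|_] /= h; last exact: IH.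
have [E|E] := step_cases acc x; rewrite E in h *; last exact: IH.
move: h; have [r ->] := foldl_ext (rcons acc x) s.
by rewrite has_cat has_rcons ex eqxx.
Qed.

Lemma accept_split acc s y : y \in foldl gs acc s -> y \notin acc ->
  exists p q, s = p ++ y :: q /\
   (y.1 \notin [seq z.1 | z <- foldl gs acc p]) &&
   [disjoint y.2 & \bigcup_(z <- foldl gs acc p) z.2].
Proof.
elim: s acc => [|x s IH] acc /=; first by move=> ->.
move=> hy hacc.
case: (boolP (y \in greedy_step acc x)) => hs.
  move: hs; rewrite /greedy_step; case: ifP => hc; last by rewrite (negbTE hacc).
  rewrite mem_rcons in_cons (negbTE hacc) orbF => /eqP ->.
  by exists [::], s.
have [p [q [-> h]]] := IH _ hy hs.
by exists (x :: p), q.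
Qed.

Lemma filter_one s y : uniq [seq p.1 | p <- s] -> y \in s ->
  [seq p.2 | p <- s & p.1 == y.1] = [:: y.2].
Proof.
elim: s => //= x s IH /andP[nx u]; rewrite in_cons; case/orP => [/eqP ->|hy].
  rewrite eqxx /=; congr cons.
  suff -> : [seq p <- s | p.1 == x.1] = [::] by [].
  apply/eqP; rewrite -(negbK (_ == _)) -has_filter; apply: contra nx.
  by rewrite in_ids.
case: ifP => hx; last exact: IH.
by move: nx; rewrite in_ids; case/hasP; exists y => //; rewrite (eqP hx).
Qed.

Lemma alloc_eq (b : profile R m n) i X : (i, X) \in greedy_accepted b -> alloc b i = X.
Proof.
move=> h; rewrite /alloc.
by rewrite (@filter_one _ _ (ids_uniq [::] _ isT) h).
Qed.

Lemma alloc_none (b : profile R m n) i :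
  ~~ has (fun p => p.1 == i) (greedy_accepted b) -> alloc b i = set0.
Proof.
move=> h; rewrite /alloc.
suff -> : [seq p <- greedy_accepted b | p.1 == i] = [::] by [].
by apply/eqP; rewrite -(negbK (_ == _)) -has_filter.
Qed.


Lemma bigmax_ge0 (T : Type) (r : seq T) (P : pred T) (F : T -> R) :
  0 <= \big[Num.max/0]_(x <- r | P x) F x.
Proof. by elim/big_rec: _ => // j x _ h; rewrite le_max h orbT. Qed.

Lemma bigmax_ub (T : eqType) (r : seq T) (P : pred T) (F : T -> R) j :
  j \in r -> P j -> F j <= \big[Num.max/0]_(x <- r | P x) F x.
Proof.
elim: r => //= x r IH; rewrite in_cons big_cons => /orP[/eqP <-|hj] hP.
  by rewrite hP le_max lexx.
by case: ifP => _; rewrite ?le_max IH ?orbT.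
Qed.

Lemma bigmax_att (T : eqType) (r : seq T) (P : pred T) (F : T -> R) :
  \big[Num.max/0]_(x <- r | P x) F x = 0 \/
  exists2 j, j \in r & P j /\ \big[Num.max/0]_(x <- r | P x) F x = F j.
Proof.
elim: r => [|x r IH]; first by left; rewrite big_nil.
rewrite big_cons; case: ifP => hP.
  case: (leP (F x) (\big[Num.max/0]_(x <- r | P x) F x)) => _.
    case: IH => [->|[j hj [hPj ->]]]; first by left.
    by right; exists j; rewrite ?in_cons ?hj ?orbT.
  by right; exists x; rewrite ?mem_head.
case: IH => [->|[j hj [hPj ->]]]; first by left.
by right; exists j; rewrite ?in_cons ?hj ?orbT.
Qed.

Lemma mem_elem (b : profile R m n) (y : bid m n) :
  (y \in elem_bids b) = (y.2 \in (b y.1).2) && (0 < (b y.1).1 y.2).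
Proof.
rewrite mem_filter andbC; congr andb.
apply/allpairsPdep/idP => [[j [X [_ hX ->]]]|hX]; first by rewrite mem_enum in hX.
by exists y.1, y.2; rewrite !mem_enum; split => //; case: y {hX}.
Qed.

Lemma elem_uniq (b : profile R m n) : uniq (elem_bids b).
Proof.
apply: filter_uniq; apply: allpairs_uniq_dep; first exact: enum_uniq.
  by move=> j _; exact: enum_uniq.
by move=> [a u] [c v] _ _ /= [e1 e2]; subst.
Qed.

Lemma sorted_split (T : eqType) (r : rel T) (tr : transitive r) p x q y :
  sorted r (p ++ x :: q) -> (y \in p -> r y x) /\ (y \in q -> r x y).
Proof.
move=> hs; split.
  elim: p hs => //= z p IH hs; rewrite in_cons => /orP[/eqP ->|hy].
    by move: hs; rewrite (path_sortedE tr) all_cat /= => /andP[/and3P[_ -> _] _].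
  by apply: IH => //; exact: path_sorted hs.
move: (cat_sorted2 hs) => [_]; rewrite /= (path_sortedE tr) => /andP[/allP h _].
exact: h.
Qed.

Lemma cat_prefix (T : eqType) (a b c d : seq T) : a ++ b = c ++ d ->
  (exists e, a = c ++ e) \/ (exists y, y \in c /\ y \in b).
Proof.
elim: a c => [|x a IH] [|z c] /=.
- by left; exists [::].
- by move=> ->; right; exists z; rewrite !mem_head.
- by left; exists (x :: a).
- case=> -> /IH [[e ->]|[y [hy hb]]]; first by left; exists e.
  by right; exists y; rewrite in_cons hy orbT.
Qed.


Lemma step_acc acc (x : bid m n) :
  (x.1 \notin [seq p.1 | p <- acc]) && [disjoint x.2 & \bigcup_(p <- acc) p.2] ->
  gs acc x = rcons acc x.
Proof. by rewrite /greedy_step => ->. Qed.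

Lemma upd_ne (b : profile R m n) i t j : j != i -> upd b i t j = b j.
Proof. by rewrite /upd => /negbTE ->. Qed.

Lemma others_eq (bs : profile R m n) i t1 t2 :
  [seq y <- sorted_bids (upd bs i t1) | y.1 != i] =
  [seq y <- sorted_bids (upd bs i t2) | y.1 != i].
Proof.
have hs : forall t, sorted (bid_before bs) [seq y <- sorted_bids (upd bs i t) | y.1 != i].
  move=> t.
  apply: (@sub_in_sorted _ [pred y : bid m n | y.1 != i] (bid_before (upd bs i t))).
  - move=> x y; rewrite !inE => hx hy.
    by rewrite /bid_before !upd_ne.
  - exact: filter_all.
  - apply: sorted_filter; first exact: bb_trans.
    apply: sort_sorted; exact: bb_total.
apply: (sorted_eq (@bb_trans bs) (@bb_anti bs)) => //.
apply: uniq_perm; rewrite ?filter_uniq ?sort_uniq ?elem_uniq //.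
move=> y; rewrite !mem_filter !mem_sort !mem_elem.
by case: (boolP (y.1 != i)) => // h; rewrite !upd_ne.
Qed.

End Proofs.

Local Notation gs := (@greedy_step _ _).
Arguments alloc_none {R m n b i}.
Arguments foldl_ext {m n}.
Arguments step_cases {m n}.
Arguments others_eq {R m n}.
Arguments in_ids {m n}.
Arguments alloc_eq {R m n b i X}.
Arguments foldl_sub {m n acc s y}.
Arguments drop_i {m n i acc s}.
Arguments accept_split {m n acc s y}.
Arguments step_acc {m n acc x}.
Arguments sorted_split {T r} tr {p x q y}.
Arguments cat_prefix {T a b c d}.


Theorem theorem8 (R : realFieldType) (m n k : nat)
    (bs : profile R m n) (i : 'I_n) (t bi : bidtype R m) :
  (forall j, j != i -> kminded k (bs j)) ->
  kminded k t ->
  kminded k bi ->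
  (* verification: the deviation is permitted *)
  ext_val bi (alloc (upd bs i bi) i) <= ext_val t (alloc (upd bs i bi) i) ->
  ext_val t (alloc (upd bs i bi) i) <= ext_val t (alloc (upd bs i t) i).
Proof.
move=> _ [_ t0 _] _ hver.
set b1 := upd bs i bi; set b2 := upd bs i t.
have ext0 : forall (u : bidtype R m) T, 0 <= ext_val u T.
  by move=> u T; exact: bigmax_ge0.
have extub : forall (u : bidtype R m) (S T : {set 'I_m}), S \in u.2 -> S \subset T -> u.1 S <= ext_val u T.
  by move=> u S T hS hST; apply: bigmax_ub; rewrite ?mem_index_enum ?hS ?hST.
have b1i : b1 i = bi by rewrite /b1 /upd eqxx.
have b2i : b2 i = t by rewrite /b2 /upd eqxx.
case: (boolP (has (fun p => p.1 == i) (greedy_accepted b1))) => hh; last first.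
  rewrite (alloc_none hh).
  have -> : ext_val t set0 = 0.
    rewrite /ext_val big_pred0 // => S'; apply/negbTE/andP => [[hS]].
    by rewrite subset0 => /eqP e; move: t0; rewrite -e hS.
  exact: ext0.
case/hasP: hh => [[j A] hx1 /= /eqP ej]; subst j.
rewrite (alloc_eq hx1) in hver *.
have hx1e : (i, A) \in elem_bids b1.
  by move: (foldl_sub hx1); rewrite in_nil /= mem_sort.
move: (hx1e); rewrite mem_elem /= b1i => /andP[hA wpos].
have hwe : bi.1 A <= ext_val t A := le_trans (extub _ _ _ hA (subxx _)) hver.
have : ext_val t A = 0 \/ exists2 S, S \in index_enum _ &
   ((S \in t.2) && (S \subset A)) /\ ext_val t A = t.1 S := bigmax_att _ _ _ (fun S => (S \in t.2) && (S \subset A)) t.1.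
case=> [e0|[S _ [/andP[hSt hSA] eS]]].
  by move: hwe; rewrite e0 => h; move: (lt_le_trans wpos h); rewrite ltxx.
have x2e : (i,S) \in elem_bids b2.
  by rewrite mem_elem /= b2i hSt -eS (lt_le_trans wpos hwe).
have x2s : (i,S) \in sorted_bids b2 by rewrite mem_sort.
have [p2 [q2 E2]] : exists p q, sorted_bids b2 = p ++ (i,S) :: q.
  by case/splitPr: x2s => p q; exists p, q.
have srt2 : sorted (bid_before b2) (p2 ++ (i,S) :: q2).
  by rewrite -E2; apply: sort_sorted; exact: bb_total.
have G2 : greedy_accepted b2 = foldl gs (gs (foldl gs [::] p2) (i,S)) q2.
  by rewrite /greedy_accepted E2 foldl_cat.
case: (boolP (has (fun p => p.1 == i) (foldl gs [::] p2))) => h2.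
  case/hasP: h2 => [[j T] hT /= /eqP ej]; subst j.
  have hT2 : (i,T) \in greedy_accepted b2.
    rewrite G2; have [r ->] := foldl_ext (gs (foldl gs [::] p2) (i,S)) q2.
    rewrite mem_cat; case: (step_cases (foldl gs [::] p2) (i,S)) => ->;
      by rewrite ?mem_rcons ?in_cons hT ?orbT.
  rewrite (alloc_eq hT2).
  have hTp : (i,T) \in p2 by move: (foldl_sub hT).
  have [h _] := sorted_split (@bb_trans _ _ _ b2) (y := (i,T)) srt2.
  move: (h hTp); rewrite /bid_before /= b2i => hb.
  have hTe : T \in t.2.
    have : (i,T) \in sorted_bids b2 by rewrite E2 mem_cat hTp.
    by rewrite mem_sort mem_elem /= b2i => /andP[].
  apply: le_trans (extub _ _ _ hTe (subxx _)); rewrite eS.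
  by case/orP: hb => [/ltW //|/andP[/eqP -> _] //].
have [p1 [q1 [E1 /andP[hi1 hd1]]]] := accept_split hx1 isT.
rewrite /= in hi1 hd1.
have F1 : foldl gs [::] p1 = foldl gs [::] [seq y <- p1 | y.1 != i].
  by apply: drop_i; rewrite -in_ids.
have F2 : foldl gs [::] p2 = foldl gs [::] [seq y <- p2 | y.1 != i].
  exact: drop_i.
have srt1 : sorted (bid_before b1) (p1 ++ (i,A) :: q1).
  by rewrite -E1; apply: sort_sorted; exact: bb_total.
have O : [seq y <- p1 | y.1 != i] ++ [seq y <- q1 | y.1 != i] =
         [seq y <- p2 | y.1 != i] ++ [seq y <- q2 | y.1 != i].
  by have := others_eq bs i bi t; rewrite -/b1 -/b2 E1 E2 !filter_cat /= eqxx /=.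
case: (cat_prefix O) => [[e Ee]|[y [hyp2 hyq1]]]; last first.
  exfalso; move: hyp2 hyq1; rewrite !mem_filter => /andP[yi yp2] /andP[_ yq1].
  have H1 := (sorted_split (@bb_trans _ _ _ b1) (y:=y) srt1).2 yq1.
  have H2 := (sorted_split (@bb_trans _ _ _ b2) (y:=y) srt2).1 yp2.
  move: H1 H2; rewrite /bid_before /= b1i b2i /b1 /b2 !upd_ne // -eS.
  move: ((bs y.1).1 y.2) => v.
  case/orP => [h1|/andP[/eqP e1 h1]]; case/orP => [h3|/andP[/eqP e2 h3]].
  - by move: (lt_trans h3 (lt_le_trans h1 hwe)); rewrite ltxx.
  - by move: (lt_le_trans h1 hwe); rewrite e2 ltxx.
  - by move: h3; rewrite -e1 => h3; move: (lt_le_trans h3 hwe); rewrite ltxx.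
  - move: h1 h3; rewrite (eq_sym i) (negbTE yi) !orbF => h1 h3.
    by move: (ltn_trans h1 h3); rewrite ltnn.
have [r Er] := foldl_ext (foldl gs [::] [seq y <- p2 | y.1 != i]) e.
have Gsub : foldl gs [::] p1 = foldl gs [::] p2 ++ r.
  by rewrite F1 Ee foldl_cat Er -F2.
have acc2 : gs (foldl gs [::] p2) (i,S) = rcons (foldl gs [::] p2) (i,S).
  apply: step_acc; apply/andP; split; first by rewrite /= in_ids.
  apply: (disjointW hSA _ hd1).
  by rewrite Gsub big_cat /= subsetUl.
have hS2 : (i,S) \in greedy_accepted b2.
  rewrite G2 acc2; have [r' ->] := foldl_ext (rcons (foldl gs [::] p2) (i,S)) q2.
  by rewrite mem_cat mem_rcons mem_head.
rewrite (alloc_eq hS2) eS; exact: extub _ _ _ hSt (subxx _).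
Qed.
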